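(* For all integers $x, y \in \mathbb{N}$, every set of $x$ vertices of a $y$-dimensional hypercube-like graph induces at most $\frac{1}{2} x \log x$ edges.
   Context: For $y \in \mathbb{N}$, a graph $H$ is $y$-dimensional hypercube-like if there is a partition $V(H) = \bigcup_{S \subseteq [y]} V_S$ (parts may be empty) such that: (1) for every edge $uv \in E(H)$ there are $S, T \subseteq [y]$ with $|S \triangle T| = 1$, $u \in V_S$ and $v \in V_T$; (2) for all $S, T \subseteq [y]$ with $|S \triangle T| = 1$, the bipartite graph $H[V_S, V_T]$ of edges between $V_S$ and $V_T$ is a matching (not necessarily perfect or non-empty). Logarithms are in base 2. *)

(* Defs.v *)
From mathcomp Require Import all_boot.
From Stdlib Require Import Reals.
Set Implicit Arguments. Unset Strict Implicit. Unset Printing Implicit Defensive.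

Definition simple_graph (T : finType) (e : rel T) : Prop :=
  symmetric e /\ irreflexive e.

Definition symdiff (y : nat) (S U : {set 'I_y}) : {set 'I_y} :=
  (S :\: U) :|: (U :\: S).

(* f assigns to each vertex the index S of the part V_S containing it,
   so V_S = f^{-1}(S); this is exactly a partition into (possibly empty)
   parts indexed by subsets of [y].
   (1) every edge joins parts V_S, V_U with |S △ U| = 1;
   (2) for |S △ U| = 1, the edges between V_S and V_U form a matching:
       no vertex of V_S has two distinct neighbours in V_U (the other side
       is covered by swapping S and U). *)
Definition hypercube_like_partition (T : finType) (e : rel T) (y : nat)
    (f : T -> {set 'I_y}) : Prop :=
  (forall u v, e u v -> #|symdiff (f u) (f v)| = 1%N) /\
  (forall S U : {set 'I_y}, #|symdiff S U| = 1%N ->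
     forall u v w, f u = S -> f v = U -> f w = U ->
       e u v -> e u w -> v = w).

Definition hypercube_like (T : finType) (e : rel T) (y : nat) : Prop :=
  exists f : T -> {set 'I_y}, hypercube_like_partition e f.

Definition induced_edges (T : finType) (e : rel T) (X : {set T}) : {set {set T}} :=
  [set E : {set T} | (E \subset X) &&
     [exists u : T, exists v : T, e u v && (E == [set u; v])]].

Definition log2 (r : R) : R := (ln r / ln 2)%R.

(* Main.v *)
Require Import Defs.
From mathcomp Require Import all_boot.
From Stdlib Require Import Reals Lra.
From Coquelicot Require Import Coquelicot.
From Stdlib Require Import Lia.
From mathcomp Require Import zify.
Delimit Scope nat_scope with N.
Delimit Scope R_scope with R.

Lemma xlnx_nonneg (n : nat) : (0 <= INR n * ln (INR n))%R.
Proof.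
destruct n as [|n]. simpl. lra.
apply Rmult_le_pos. apply pos_INR.
destruct n as [|n]. simpl. rewrite ln_1. lra.
rewrite <- ln_1. left. apply ln_increasing. lra.
apply: (lt_INR 1). by apply/ltP.
Qed.

Lemma key_real (A B : R) : (0 < A)%R -> (A <= B)%R ->
  (A * ln A + B * ln B + 2 * ln 2 * A <= (A + B) * ln (A + B))%R.
Proof.
intros HA HAB.
pose phi := (fun t => (A+t) * ln (A+t) - t * ln t)%R.
assert (H0 : phi A = (A * ln A + 2 * ln 2 * A)%R).
{ unfold phi. replace (A + A)%R with (2 * A)%R by ring. rewrite ln_mult; try lra. }
assert (phi A <= phi B)%R.
{ destruct HAB as [HAB|HAB]; [|subst; lra].
  destruct (MVT_cor2 phi (fun c => ln (A+c) - ln c)%R A B HAB) as [c [Hc1 Hc2]].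
  { intros c Hc. apply is_derive_Reals. unfold phi. auto_derive.
    repeat split; lra. field. lra. }
  assert (0 < ln (A + c) - ln c)%R. { pose proof (ln_increasing c (A+c)). lra. }
  assert (0 < (ln (A + c) - ln c) * (B - A))%R. { apply Rmult_lt_0_compat; lra. }
  lra. }
unfold phi in H, H0. lra.
Qed.

Definition gR (n : nat) : R := (/ 2 * INR n * log2 (INR n))%R.

Lemma ln2_pos : (0 < ln 2)%R.
Proof. pose proof ln_lt_2. lra. Qed.

Lemma gR_nonneg n : (0 <= gR n)%R.
Proof.
unfold gR, log2. pose proof (xlnx_nonneg n). pose proof ln2_pos.
replace (/ 2 * INR n * (ln (INR n) / ln 2))%R with
  ((INR n * ln (INR n)) * / (2 * ln 2))%R by (field; lra).
apply Rmult_le_pos. lra. left. apply Rinv_0_lt_compat. lra.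
Qed.

Lemma key_le (a b : nat) : leq a b ->
  (gR a + gR b + INR a <= gR (addn a b))%R.
Proof.
move=> hab. unfold gR, log2. pose proof ln2_pos.
rewrite (plus_INR a b).
destruct a as [|a].
{ simpl. rewrite !Rmult_0_r !Rmult_0_l !Rplus_0_l Rplus_0_r. lra. }
have HA : (0 < INR a.+1)%R by apply lt_0_INR; apply/ltP.
have HAB : (INR a.+1 <= INR b)%R by apply le_INR; apply/leP.
pose proof (key_real _ _ HA HAB).
apply Rmult_le_reg_r with (2 * ln 2)%R. lra.
set A := INR a.+1. set B := INR b. fold A in H0, HA, HAB. fold B in H0, HAB.
replace ((/ 2 * A * (ln A / ln 2) + / 2 * B * (ln B / ln 2) + A) * (2 * ln 2))%R
  with (A * ln A + B * ln B + 2 * ln 2 * A)%R by (field; lra).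
replace (/ 2 * (A + B) * (ln (A + B) / ln 2) * (2 * ln 2))%R
  with ((A + B) * ln (A + B))%R by (field; lra).
exact H0.
Qed.

Lemma key_nat (a b : nat) : (gR a + gR b + INR (minn a b) <= gR (addn a b))%R.
Proof.
case: (leqP a b) => h.
- exact: key_le.
- rewrite addnC (Rplus_comm (gR a)). exact: key_le (ltnW h).
Qed.

Open Scope nat_scope.
Section Comb.
Variables (y : nat) (T : finType) (e : rel T) (f : T -> {set 'I_y}).
Hypothesis esym : symmetric e.
Hypothesis Hf : hypercube_like_partition e f.

Lemma symdiff_det (S U : {set 'I_y}) i : #|symdiff S U| = 1%N ->
  (i \in U) != (i \in S) -> U = [set j | if j == i then ~~ (i \in S) else j \in S].
Proof.
move=> /eqP /cards1P [k Hk] hi.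
have iin : i \in symdiff S U.
  by rewrite /symdiff !inE; move: hi; case: (i \in U); case: (i \in S).
rewrite Hk inE in iin; move/eqP: iin => ik.
apply/setP => j; rewrite inE; case: eqP => [-> | ne].
  by move: hi; case: (i \in U); case: (i \in S).
have : j \notin symdiff S U by rewrite Hk inE; apply/eqP => jk; apply: ne; rewrite jk ik.
by rewrite /symdiff !inE; case: (j \in U); case: (j \in S).
Qed.

Lemma uniq_nb i u v w : e u v -> e u w -> (i \in f v) != (i \in f u) ->
  (i \in f w) != (i \in f u) -> v = w.
Proof.
move=> euv euw hv hw.
have hv1 := (proj1 Hf) _ _ euv. have hw1 := (proj1 Hf) _ _ euw.
have E1 := symdiff_det _ _ i hv1 hv. have E2 := symdiff_det _ _ i hw1 hw.
apply: ((proj2 Hf) (f u) (f v) hv1 u v w erefl erefl _ euv euw). by rewrite E2 -E1.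
Qed.

Definition cross (A B : {set T}) :=
  [set E in induced_edges e (A :|: B) | ~~ (E \subset A) && ~~ (E \subset B)].

Lemma cross_le (A B : {set T}) i :
  (forall a b, a \in A -> b \in B -> (i \in f b) != (i \in f a)) ->
  #|cross A B| <= #|A|.
Proof.
move=> hAB.
pose g u := if [pick v in B | e u v] is Some v then [set u; v] else set0.
have gE : forall u v, u \in A -> v \in B -> e u v -> g u = [set u; v].
  move=> u v uA vB euv; rewrite /g; case: pickP => [w /andP [wB euw] | none].
    by rewrite (uniq_nb _ _ _ _ euw euv (hAB _ _ uA wB) (hAB _ _ uA vB)).
  by move: (none v); rewrite vB euv.
apply: leq_trans (leq_imset_card g A).
apply: subset_leq_card; apply/subsetP => E.
rewrite /cross !inE => /andP [/andP [EX /existsP [u /existsP [v /andP [euv /eqP EE]]]] /andP [nA nB]].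
have uX : u \in A :|: B by apply: (subsetP EX); rewrite EE !inE eqxx.
have vX : v \in A :|: B by apply: (subsetP EX); rewrite EE !inE eqxx orbT.
rewrite inE in uX; rewrite inE in vX.
case/orP: uX => uA; case/orP: vX => vA.
- by move: nA; rewrite EE subUset !sub1set uA vA.
- by apply/imsetP; exists u => //; rewrite (gE u v).
- apply/imsetP; exists v => //; rewrite (gE v u) //; [by rewrite EE setUC | by rewrite esym].
- by move: nB; rewrite EE subUset !sub1set uA vA.
Qed.

Lemma no_edge_same u v : e u v -> f u <> f v.
Proof.
move=> euv fe; have := (proj1 Hf) _ _ euv; rewrite fe /symdiff setDv setU0 cards0 //.
Qed.

Lemma main_bound n : forall X : {set T}, #|X| <= n -> (INR #|induced_edges e X| <= gR #|X|)%R.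
Proof.
elim: n => [|n IH] X hX.
  case: (set_0Vmem (induced_edges e X)) => [-> | [E HE]].
    by rewrite cards0; apply: gR_nonneg.
  exfalso; move: HE; rewrite inE => /andP [EX /existsP [u /existsP [v /andP [euv /eqP EE]]]].
  have : u \in X by apply: (subsetP EX); rewrite EE !inE eqxx.
  by move: hX; rewrite leqn0 cards_eq0 => /eqP ->; rewrite inE.
case: (set_0Vmem (induced_edges e X)) => [-> | [E HE]].
  by rewrite cards0; apply: gR_nonneg.
move: HE; rewrite inE => /andP [EX /existsP [u /existsP [v /andP [euv /eqP EE]]]].
have uX : u \in X by apply: (subsetP EX); rewrite EE !inE eqxx.
have vX : v \in X by apply: (subsetP EX); rewrite EE !inE eqxx orbT.
have [i hi] : exists i, (i \in f v) != (i \in f u).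
  apply/existsP; apply: contraT; rewrite negb_exists => /forallP H.
  exfalso; apply: (no_edge_same _ _ euv); apply/setP => j.
  by move: (H j); rewrite negbK => /eqP.
pose P := [set z | (i \in f z) == (i \in f u)].
pose X0 := X :&: P. pose X1 := X :\: P.
have hcard : (#|X0| + #|X1|)%N = #|X| by rewrite cardsID.
have u0 : u \in X0 by rewrite !inE uX eqxx.
have v1 : v \in X1 by rewrite !inE vX hi.
have c0 : 0 < #|X0| by apply/card_gt0P; exists u.
have c1 : 0 < #|X1| by apply/card_gt0P; exists v.
have h0 : #|X0| <= n by move: hX; rewrite -hcard; move: c1; clear; lia.
have h1 : #|X1| <= n by move: hX; rewrite -hcard; move: c0; clear; lia.
have HX : X0 :|: X1 = X by rewrite setID.
have cond01 : forall a b, a \in X0 -> b \in X1 -> (i \in f b) != (i \in f a).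
  move=> a b; rewrite !inE => /andP [_ /eqP ->] /andP [/eqP nb _]; by apply/eqP.
have cond10 : forall a b, a \in X1 -> b \in X0 -> (i \in f b) != (i \in f a).
  move=> a b; rewrite !inE => /andP [/eqP na _] /andP [_ /eqP ->]; apply/eqP => h; by apply: na.
have cr : #|cross X0 X1| <= minn #|X0| #|X1|.
  rewrite leq_min (cross_le _ _ _ cond01) /=.
  have -> : cross X0 X1 = cross X1 X0.
    rewrite /cross [X0 :|: X1]setUC; apply/setP => E0; rewrite !inE; by case: (E0 \subset X0); case: (E0 \subset X1); rewrite /= ?andbF.
  exact: cross_le _ _ _ cond10.
have sub : induced_edges e X \subset
    induced_edges e X0 :|: induced_edges e X1 :|: cross X0 X1.
  apply/subsetP => E0 HE0; rewrite !inE.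
  move: HE0; rewrite inE => /andP [EX0 ex]; rewrite ex !andbT.
  rewrite HX EX0 /=.
  by case: (E0 \subset X0); case: (E0 \subset X1).
have cnt : #|induced_edges e X| <= #|induced_edges e X0| + #|induced_edges e X1| + minn #|X0| #|X1|.
  apply: leq_trans (subset_leq_card sub) _.
  rewrite cardsU; apply: leq_trans (leq_subr _ _) _.
  rewrite cardsU; apply: leq_add; last exact: cr.
  exact: leq_subr.
have cntR := le_INR _ _ (elimT leP cnt).
eapply Rle_trans; first exact: cntR.
rewrite !plus_INR.
rewrite -hcard. eapply Rle_trans; last exact: (key_nat #|X0| #|X1|).
apply: Rplus_le_compat_r; apply: Rplus_le_compat; by [apply: IH | apply: IH].
Qed.

End Comb.

Theorem lemma5p1 (y : nat) (T : finType) (e : rel T) :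
  simple_graph e -> hypercube_like e y ->
  forall (x : nat) (X : {set T}), #|X| = x ->
    (INR #|induced_edges e X| <= / 2 * INR x * log2 (INR x))%R.
Proof.
move=> [esym _] [f Hf] x X <-.
exact: (@main_bound y T e f esym Hf #|X| X (leqnn _)).
Qed.
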